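(* Let $(L,T,U,\bar e)$ be a feasible basis structure of an instance of the budget-constrained minimum cost flow problem and let $x$ be its basic feasible flow (the basic solution with respect to the budget $B$). Then $x$ can be decomposed as $x = x^I + x^C$, where $x^I\in\mathbb{Z}^E$ is integral and $x^C$ is non-zero (and possibly fractional) only on the edges of the cycle $C(\bar e)$.
   Context: Budget-constrained minimum cost flow problem: given a directed multigraph $G=(V,E)$ with capacities $u_e\in\mathbb{N}_{\ge 0}$, costs $c_e\in\mathbb{Z}$, usage fees $b_e\in\mathbb{N}_{\ge 0}$ for $e\in E$, and a budget $B\in\mathbb{N}_{\ge0}$. A feasible flow is a vector $x\in\mathbb{R}^E$ with $\sum_{e\in\delta^-(v)}x_e=\sum_{e\in\delta^+(v)}x_e$ for all $v\in V$ ($\delta^+(v)$, $\delta^-(v)$ the outgoing/incoming edges) and $0\le x_e\le u_e$; write $c(x)=\sum_e c_ex_e$, $b(x)=\sum_e b_ex_e$. The goal is to minimize $c(x)$ over feasible flows with $b(x)\le B$. A basis structure is a tuple $(L,T,U,\bar e)$ with $\bar e\in E$, $L,T,U$ a partition of $E\setminus\{\bar e\}$, and $T$ a spanning tree of the underlying undirected graph of $G$. For $f\in E\setminus T$, $C(f)$ is the unique (undirected) cycle in $T\cup\{f\}$; $C^+(f)$ ($C^-(f)$) are its edges oriented in the same (opposite) direction as $f$ along the cycle, and $b(C(f))=\sum_{g\in C^+(f)}b_g-\sum_{g\in C^-(f)}b_g$. It is required that $b(C(\bar e))\neq 0$. The basic solution of $(L,T,U,\bar e)$ is the unique vector $x$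 satisfying flow conservation at every node, $x_e=0$ for $e\in L$, $x_e=u_e$ for $e\in U$, and $b(x)=B$. The basis structure is feasible if this $x$ satisfies $0\le x\le u$; $x$ is then called its basic feasible flow. *)

(* Defs.v *)
From mathcomp Require Import all_boot all_order all_algebra.
Set Implicit Arguments. Unset Strict Implicit. Unset Printing Implicit Defensive.
Import Order.TTheory GRing.Theory Num.Theory.

(* An undirected walk is a sequence of (edge, direction) pairs; (g, true)
   traverses g from src g to tgt g, (g, false) from tgt g to src g. *)
Local Open Scope ring_scope.
Section Graph.
Variables (V E : finType) (src tgt : E -> V).

Definition step_from (gd : E * bool) : V := if gd.2 then src gd.1 else tgt gd.1.
Definition step_to (gd : E * bool) : V := if gd.2 then tgt gd.1 else src gd.1.

Fixpoint uwalk (v w : V) (p : seq (E * bool)) : bool :=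
  match p with
  | [::] => v == w
  | gd :: p' => (step_from gd == v) && uwalk (step_to gd) w p'
  end.

Definition uverts (v : V) (p : seq (E * bool)) : seq V := v :: map step_to p.

Definition tree_path (T : {set E}) (v w : V) (p : seq (E * bool)) : bool :=
  [&& uwalk v w p, all (fun gd => gd.1 \in T) p & uniq (uverts v p)].

Definition spanning_tree (T : {set E}) : Prop :=
  (forall v w : V, exists p, uwalk v w p && all (fun gd => gd.1 \in T) p)
  /\ #|T| = #|V|.-1.

(* Fundamental cycle C(f) of f w.r.t. T: the edge f followed by the (unique)
   simple path p in T from tgt f back to src f.  C^+(f) = f and the edges
   traversed forward in p; C^-(f) = edges traversed backward in p. *)
Definition fund_cycle_path (T : {set E}) (f : E) (p : seq (E * bool)) : bool :=
  tree_path T (tgt f) (src f) p.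

Definition in_cycle (f : E) (p : seq (E * bool)) (g : E) : bool :=
  (g == f) || (g \in map fst p).

Definition b_cycle (b : E -> nat) (f : E) (p : seq (E * bool)) : int :=
  (b f)%:Z + \sum_(gd <- p) (if gd.2 then (b gd.1)%:Z else - (b gd.1)%:Z).

Definition basis_structure (L T U : {set E}) (ebar : E) (b : E -> nat) : Prop :=
  [/\ [&& [disjoint L & T], [disjoint L & U] & [disjoint T & U]],
      L :|: T :|: U = [set~ ebar],
      spanning_tree T &
      forall p, fund_cycle_path T ebar p -> b_cycle b ebar p != 0].

Definition basic_solution (R : numDomainType) (L U : {set E}) (u b : E -> nat)
  (B : nat) (x : E -> R) : Prop :=
  [/\ forall v : V, \sum_(e | tgt e == v) x e = \sum_(e | src e == v) x e,
      forall e, e \in L -> x e = 0,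
      forall e, e \in U -> x e = (u e)%:R &
      \sum_e (b e)%:R * x e = B%:R :> R].

Definition feasible_flow_bounds (R : numDomainType) (u : E -> nat) (x : E -> R) :=
  forall e, 0 <= x e <= (u e)%:R.

End Graph.

(* Main.v *)
Require Import Defs.
From mathcomp Require Import all_boot all_order all_algebra.
From mathcomp Require Import zify ring.
From Stdlib Require Import Classical ClassicalEpsilon.
Import Order.TTheory GRing.Theory Num.Theory.
Local Open Scope ring_scope.
Set Implicit Arguments. Unset Strict Implicit.
Section Aux.
Variables (V E : finType) (src tgt : E -> V).
Local Notation uwalk := (uwalk src tgt).
Local Notation step_from := (step_from src tgt).
Local Notation step_to := (step_to src tgt).
Local Notation uverts := (uverts src tgt).

Definition reach (F : {set E}) x y :=
  exists p, uwalk x y p && all (fun gd => gd.1 \in F) p.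

Lemma uwalk_cat x y z p q : uwalk x z p -> uwalk z y q -> uwalk x y (p ++ q).
Proof.
elim: p x => [|gd p IH] x /=; first by move/eqP->.
by move=> /andP[-> H1] H2; rewrite (IH _ H1 H2).
Qed.

Lemma reach_refl (F : {set E}) x : reach F x x.
Proof. by exists [::]; rewrite /= eqxx. Qed.

Lemma reach_trans (F : {set E}) x y z : reach F x y -> reach F y z -> reach F x z.
Proof.
move=> [p /andP[H1 H2]] [q /andP[H3 H4]]; exists (p ++ q).
by rewrite (uwalk_cat H1 H3) all_cat H2 H4.
Qed.

Lemma reach_step (F : {set E}) (gd : E * bool) : gd.1 \in F -> reach F (step_from gd) (step_to gd).
Proof. by move=> H; exists [:: gd]; rewrite /= !eqxx H. Qed.

Lemma splitA (F : {set E}) e x y : reach F x y ->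
  reach (F :\ e) x y \/
  ((reach (F :\ e) x (src e) \/ reach (F :\ e) x (tgt e)) /\
   (reach (F :\ e) (src e) y \/ reach (F :\ e) (tgt e) y)).
Proof.
case=> p; elim: p x => [|gd p IH] x /=.
  by move=> /andP[/eqP-> _]; left; exact: reach_refl.
move=> /andP[/andP[/eqP Hx Hw] /andP[Hin Hall]].
have IH' := IH (step_to gd); rewrite Hw Hall in IH'; have {IH'} IH' := IH' isT.
case: (eqVneq gd.1 e) => He.
  right; split.
    move: Hx; rewrite /Defs.step_from He; case: gd.2 => <-.
      by left; apply: reach_refl.
    by right; apply: reach_refl.
  case: IH' => [H|[_ H]] //.
  move: H; rewrite /Defs.step_to He; case: gd.2 => H; [by right|by left].
have Hs : reach (F :\ e) x (step_to gd).
  by rewrite -Hx; apply: reach_step; rewrite !inE He Hin.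
case: IH' => [H|[[H|H] H']].
- by left; apply: reach_trans Hs H.
- by right; split=> //; left; apply: reach_trans Hs H.
- by right; split=> //; right; apply: reach_trans Hs H.
Qed.

Lemma count_reach n : forall (F : {set E}) (R : {set V}), #|F| = n ->
  (forall v, exists2 r, r \in R & reach F r v) -> (#|V| <= n + #|R|)%N.
Proof.
elim: n => [|n IH] F R Hc Hr.
  move/eqP: Hc; rewrite cards_eq0 => /eqP HF; rewrite add0n.
  apply: subset_leq_card; apply/subsetP => v _.
  have [r Hr' [[|gd p] /andP[H1 H2]]] := Hr v.
    by move/eqP: H1 => <-.
  by move: H2; rewrite /= HF inE.
have : F != set0 by rewrite -cards_eq0 Hc.
case/set0Pn => e He.
have Hc' : #|F :\ e| = n by move: Hc; rewrite (cardsD1 e) He; case.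
have HR a : (#|a |: R| <= #|R| + 1)%N by rewrite cardsU1 addnC leq_add2l; case: (a \notin R).
case: (classic (exists2 r, r \in R & reach (F :\ e) r (src e))) => [[r0 Hr0 Hs]|Hn].
  apply: leq_trans (IH _ (tgt e |: R) Hc' _) _; last by move: (HR (tgt e)); lia.
  move=> v; have [r Hr' Hrv] := Hr v.
  case: (splitA e Hrv) => [H|[_ [H|H]]].
  - by exists r => //; rewrite inE Hr' orbT.
  - by exists r0; [rewrite inE Hr0 orbT|apply: reach_trans Hs H].
  - by exists (tgt e); [rewrite setU11|].
apply: leq_trans (IH _ (src e |: R) Hc' _) _; last by move: (HR (src e)); lia.
move=> v; have [r Hr' Hrv] := Hr v.
case: (splitA e Hrv) => [H|[[H1|H1] [H|H]]].
- by exists r => //; rewrite inE Hr' orbT.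
- by case: Hn; exists r.
- by case: Hn; exists r.
- by exists (src e); [rewrite setU11|].
- by exists r; [rewrite inE Hr' orbT|apply: reach_trans H1 H].
Qed.

Lemma tree_acyclic (T : {set E}) t : spanning_tree src tgt T -> t \in T ->
  ~ reach (T :\ t) (tgt t) (src t).
Proof.
move=> [Hc Hcard] Ht Hr.
have := @count_reach #|T :\ t| (T :\ t) [set tgt t] erefl.
have H : forall v, exists2 r, r \in [set tgt t] & reach (T :\ t) r v.
  move=> v; exists (tgt t); first by rewrite inE.
  have HT : reach T (tgt t) v by apply: Hc.
  case: (splitA t HT) => [H|[_ [H|H]]] //.
  exact: reach_trans Hr H.
move=> /(_ H); rewrite cards1.
move: Hcard; rewrite (cardsD1 t) Ht.
have : (0 < #|V|)%N by apply/card_gt0P; exists (tgt t).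
lia.
Qed.

Lemma suffix_path (F : {set E}) z y q x : uwalk z y q -> all (fun gd => gd.1 \in F) q ->
  uniq (uverts z q) -> x \in uverts z q ->
  exists q2, [&& uwalk x y q2, all (fun gd => gd.1 \in F) q2 & uniq (uverts x q2)].
Proof.
elim: q z => [|gd q IH] z /=.
  move=> H _ _; rewrite inE => /eqP->; exists [::]; by rewrite /= H.
move=> /andP[H1 H2] /andP[H3 H4] Hu.
case: (eqVneq x z) => [->|Hxz] Hx.
  by exists (gd :: q); rewrite /= H1 H2 H3 H4.
move: Hu; rewrite /= => /andP[_ Hu]; move: Hx; rewrite /= inE (negbTE Hxz) /= => Hx.
exact: IH H2 H4 Hu Hx.
Qed.

Lemma shorten (F : {set E}) x y : reach F x y ->
  exists q, [&& uwalk x y q, all (fun gd => gd.1 \in F) q & uniq (uverts x q)].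
Proof.
case=> p; elim: p x => [|gd p IH] x /=.
  by move=> /andP[H _]; exists [::]; rewrite /= H.
move=> /andP[/andP[/eqP Hx Hw] /andP[Hin Hall]].
have [q /and3P[Q1 Q2 Q3]] := IH (step_to gd) (introT andP (conj Hw Hall)).
case Hxin: (x \in uverts (step_to gd) q).
  exact: suffix_path Q1 Q2 Q3 Hxin.
exists (gd :: q); rewrite /= Hx eqxx Q1 Hin Q2 /=.
by move: Q3; rewrite /uverts /Defs.uverts /= => ->; rewrite andbT; move: Hxin; rewrite /Defs.uverts => ->.
Qed.
End Aux.
Section Alg.
Variables (R : realFieldType) (V E : finType) (src tgt : E -> V).
Local Notation uwalk := (uwalk src tgt).
Local Notation step_from := (step_from src tgt).
Local Notation step_to := (step_to src tgt).
Local Notation reach := (reach src tgt).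

Definition isint (r : R) := exists z : int, r = z%:~R.
Lemma isint0 : isint 0. Proof. by exists 0. Qed.
Lemma isintD a b : isint a -> isint b -> isint (a + b).
Proof. by move=> [z ->] [w ->]; exists (z + w); rewrite intrD. Qed.
Lemma isintM a b : isint a -> isint b -> isint (a * b).
Proof. by move=> [z ->] [w ->]; exists (z * w); rewrite intrM. Qed.
Lemma isintN a : isint a -> isint (- a).
Proof. by move=> [z ->]; exists (- z); rewrite intrN. Qed.

Definition dd (e : E) (v : V) : R := (tgt e == v)%:R - (src e == v)%:R.
Definition net (f : E -> R) v := \sum_e f e * dd e v.

Lemma sum_ind (T0 : finType) (f : T0 -> R) a : \sum_v f v * (a == v)%:R = f a.
Proof.
rewrite (bigD1 a) //= eqxx mulr1 big1 ?addr0 // => v /negbTE.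
by rewrite eq_sym => ->; rewrite mulr0.
Qed.

Lemma sumE (f : E -> R) (P : pred E) : \sum_e f e * (P e)%:R = \sum_(e | P e) f e.
Proof. by rewrite [RHS]big_mkcond; apply: eq_bigr => e _; case: (P e); rewrite ?mulr1 ?mulr0. Qed.

Lemma net_cons (x : E -> R) v :
  \sum_(e | tgt e == v) x e = \sum_(e | src e == v) x e -> net x v = 0.
Proof.
move=> H; rewrite /net /dd.
under eq_bigr => e _ do rewrite mulrBr.
by rewrite sumrB (sumE x (fun e => tgt e == v)) (sumE x (fun e => src e == v)) H subrr.
Qed.

Lemma cut (T : {set E}) (w : E -> R) t :
  spanning_tree src tgt T -> t \in T -> (forall v, net w v = 0) ->
  (forall e, e \notin T -> isint (w e)) -> isint (w t).
Proof.
move=> Htree Ht Hnet Hint.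
pose ind := fun v => (if excluded_middle_informative (reach (T :\ t) (tgt t) v) then 1 else 0 : R).
have Hind a : isint (ind a).
  by rewrite /ind; case: excluded_middle_informative => ?; [exists 1|exists 0].
have H0 : \sum_v ind v * net w v = 0 by rewrite big1 // => v _; rewrite Hnet mulr0.
have H1 : \sum_v ind v * net w v = \sum_e w e * (ind (tgt e) - ind (src e)).
  rewrite /net; under eq_bigr => v _ do rewrite mulr_sumr.
  rewrite exchange_big; apply: eq_bigr => e _.
  rewrite -(sum_ind ind (tgt e)) -(sum_ind ind (src e)) -sumrB mulr_sumr.
  by apply: eq_bigr => v _; rewrite /dd; ring.
have Hct : ind (tgt t) - ind (src t) = 1.
  rewrite /ind; case: excluded_middle_informative => H; last by case: H; apply: reach_refl.
  case: excluded_middle_informative => H'; last by rewrite subr0.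
  by case: (tree_acyclic Htree Ht H').
have Hce e : e \in T -> e != t -> ind (tgt e) - ind (src e) = 0.
  move=> HeT Het.
  have HeT' : e \in T :\ t by rewrite !inE Het HeT.
  have S1 : reach (T :\ t) (src e) (tgt e) by exact: (@reach_step _ _ src tgt _ (e, true)).
  have S2 : reach (T :\ t) (tgt e) (src e) by exact: (@reach_step _ _ src tgt _ (e, false)).
  rewrite /ind; case: excluded_middle_informative => A; case: excluded_middle_informative => B;
    rewrite ?subrr //.
  - by case: B; apply: reach_trans A S2.
  - by case: A; apply: reach_trans B S1.
move: H0; rewrite H1 (bigD1 t) //= Hct mulr1 => /eqP; rewrite addr_eq0 => /eqP ->.
apply: isintN; apply: (big_ind isint) => //; first exact: isint0; first exact: isintD.
move=> e Het; case HeT: (e \in T).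
  by rewrite Hce // mulr0; exact: isint0.
by apply: isintM; [apply: Hint; rewrite HeT|apply: isintD; [apply: Hind|apply: isintN; apply: Hind]].
Qed.
End Alg.
Section Cyc.
Variables (R : realFieldType) (V E : finType) (src tgt : E -> V).

Definition sgd (gd : E * bool) : R := if gd.2 then 1 else -1.

Lemma walk_net a b p v : uwalk src tgt a b p ->
  \sum_(gd <- p) sgd gd * dd R src tgt gd.1 v = (b == v)%:R - (a == v)%:R.
Proof.
elim: p a => [|gd p IH] a /=.
  by move/eqP->; rewrite big_nil subrr.
move=> /andP[/eqP Ha Hw]; rewrite big_cons (IH _ Hw) -Ha.
rewrite /sgd /dd /Defs.step_to /Defs.step_from; case: gd.2; ring.
Qed.

Definition chi (ebar : E) (p : seq (E * bool)) (e : E) : R :=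
  (e == ebar)%:R + \sum_(gd <- p) (gd.1 == e)%:R * sgd gd.

Lemma chi_net ebar p v : uwalk src tgt (tgt ebar) (src ebar) p ->
  net src tgt (chi ebar p) v = 0.
Proof.
move=> Hw; rewrite /net /chi.
under eq_bigr => e _ do rewrite mulrDl mulr_suml.
rewrite big_split /= exchange_big /=.
have -> : \sum_e (e == ebar)%:R * dd R src tgt e v = dd R src tgt ebar v.
  rewrite -[RHS](sum_ind (fun e => dd R src tgt e v) ebar).
  by apply: eq_bigr => e _; rewrite mulrC eq_sym.
have -> : \sum_(gd <- p) \sum_e (gd.1 == e)%:R * sgd gd * dd R src tgt e v
    = \sum_(gd <- p) sgd gd * dd R src tgt gd.1 v.
  apply: eq_bigr => gd _.
  rewrite -(sum_ind (fun e => sgd gd * dd R src tgt e v) gd.1).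
  by apply: eq_bigr => e _; ring.
rewrite (walk_net v Hw) /dd; ring.
Qed.

Lemma chi_out ebar p e : e != ebar -> e \notin map fst p -> chi ebar p e = 0.
Proof.
move=> H1 H2; rewrite /chi (negbTE H1) add0r big_seq big1 // => gd Hgd.
case: (eqVneq gd.1 e) => [He|_]; last by rewrite mul0r.
by case/negP: H2; rewrite -He; apply: map_f.
Qed.
End Cyc.
Theorem corollary1 (R : realFieldType) (V E : finType) (src tgt : E -> V)
  (u : E -> nat) (c : E -> int) (b : E -> nat) (B : nat)
  (L T U : {set E}) (ebar : E) (x : E -> R) :
  basis_structure src tgt L T U ebar b ->
  basic_solution src tgt L U u b B x ->
  feasible_flow_bounds u x ->
  exists (xI : E -> int) (xC : E -> R),
    (forall e, x e = (xI e)%:~R + xC e) /\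
    exists p, fund_cycle_path src tgt T ebar p /\
      forall e, ~~ in_cycle ebar p e -> xC e = 0.
Proof.
move=> [_ Hpart Htree _] [Hcons HL HU _] _.
have [p /and3P[P1 P2 P3]] :
    exists p, [&& uwalk src tgt (tgt ebar) (src ebar) p,
                 all (fun gd => gd.1 \in T) p & uniq (uverts src tgt (tgt ebar) p)].
  have Hr : reach src tgt T (tgt ebar) (src ebar) by case: Htree => H _; apply: H.
  exact: shorten Hr.
have HebT : ebar \notin T.
  apply/negP => H.
  have : ebar \in L :|: T :|: U by rewrite !inE H orbT.
  by rewrite Hpart !inE eqxx.
have Hchi e : e \notin T -> e != ebar -> chi R ebar p e = 0.
  move=> HeT Hne; apply: chi_out => //; apply/mapP => [[gd Hgd He]].
  by move/allP: P2 => /(_ gd Hgd); rewrite -He (negbTE HeT).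
pose w e := x e - x ebar * chi R ebar p e.
have Hnet v : net src tgt w v = 0.
  have H1 := net_cons (Hcons v).
  have H2 := chi_net R v P1.
  move: H1 H2; rewrite /net /w => H1 H2.
  under eq_bigr => e _ do rewrite mulrBl -mulrA.
  by rewrite sumrB -mulr_sumr H1 H2 mulr0 subrr.
have Hoff e : e \notin T -> isint (w e).
  move=> HeT; rewrite /w; case: (eqVneq e ebar) => [->|Hne].
    have -> : chi R ebar p ebar = 1.
      rewrite /chi eqxx big_seq big1 ?addr0 // => gd Hgd.
      case: (eqVneq gd.1 ebar) => [He|_]; last by rewrite mul0r.
      by move/allP: P2 => /(_ gd Hgd); rewrite He (negbTE HebT).
    by rewrite mulr1 subrr; exact: isint0.
  rewrite Hchi // mulr0 subr0.
  have : e \in L :|: T :|: U by rewrite Hpart !inE.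
  rewrite !inE (negbTE HeT) orbF => /orP[HeL|HeU].
    by rewrite HL //; exact: isint0.
  by rewrite HU //; exists (u e)%:Z.
have Hall e : isint (w e).
  case HeT: (e \in T); last by apply: Hoff; rewrite HeT.
  exact: (cut Htree HeT Hnet Hoff).
have /fin_all_exists [xI HxI] := Hall.
exists xI, (fun e => x ebar * chi R ebar p e); split.
  by move=> e; rewrite -HxI /w subrK.
exists p; split; first by rewrite /fund_cycle_path /tree_path P1 P2 P3.
move=> e; rewrite /in_cycle negb_or => /andP[H1 H2].
by rewrite chi_out // mulr0.
Qed.
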